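(* Let $(W_{i,t})_{i,t\in\mathbb{Z}}$ be i.i.d. real-valued with law $\lambda$ whose support contains $0$. Let $Y_{\cdot,0}=(Y_{i,0})_{i\in\mathbb{Z}}\sim\mu$ independent of the weights and $Y_{\cdot,t+1}=\mathcal A(Y_{\cdot,t},W_{\cdot,t})$. Suppose $\mu$ is invariant ($Y_{\cdot,t}\sim\mu$ for all $t$), $\mathbb{E}|Y_{0,0}|<\infty$, and the array $\{(Y_{i,t},W_{i,t})\}_{i,t}$ is stationary and ergodic under shifts in $i$ and in $t$. Then either $Y_{0,0}\ge0$ a.s. or $Y_{0,0}\le0$ a.s.
   Context: Signed store update for the SJR model: for $Y\in\mathbb{R}^{\mathbb{Z}}$ and $W\in\mathbb{R}^{\mathbb{Z}}$ (with $x^+=\max(x,0)$, $x^-=\max(-x,0)$), $$\mathcal A(Y,W)_i=(Y_i^+-W_i^+)^+-(Y_i^-\wedge W_i^-)+(Y_{i-1}^+\wedge W_{i-1}^+)-(Y_{i-1}^--W_{i-1}^-)^+.$$ *)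

(* Defs.v *)
From HB Require Import structures.
From mathcomp Require Import all_boot all_order all_algebra.
From mathcomp Require Import all_classical all_reals all_analysis.
Set Implicit Arguments. Unset Strict Implicit. Unset Printing Implicit Defensive.
Import Order.TTheory GRing.Theory Num.Theory.
Import numFieldNormedType.Exports.
Local Open Scope classical_set_scope.
Local Open Scope ring_scope.

Section SJR.
Variable R : realType.

Definition pos_part (x : R) : R := Num.max x 0.
Definition neg_part (x : R) : R := Num.max (- x) 0.

Definition store_update (Y W : int -> R) (i : int) : R :=
  pos_part (pos_part (Y i) - pos_part (W i))
  - Num.min (neg_part (Y i)) (neg_part (W i))
  + Num.min (pos_part (Y (i - 1)%R)) (pos_part (W (i - 1)%R))
  - pos_part (neg_part (Y (i - 1)%R) - neg_part (W (i - 1)%R)).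
End SJR.

Section Prob.
Context {d : measure_display} {T : measurableType d} {R : realType}.
Variable P : probability T R.

Definition cyl_event {I : Type} (X : I -> T -> R) (s : seq I) (B : I -> set R)
  : set T := \big[setI/setT]_(k <- s) (X k @^-1` B k).

Definition mutually_independent {I : eqType} (X : I -> T -> R) : Prop :=
  forall (s : seq I) (B : I -> set R), uniq s -> (forall k, measurable (B k)) ->
    P (cyl_event X s B) = (\prod_(k <- s) P (X k @^-1` B k))%E.

(* independence of two families of random variables (of the sigma-algebras
   they generate, tested on the pi-systems of finite cylinder events) *)
Definition indep_families {I J : Type} (X : I -> T -> R) (Z : J -> T -> R) : Prop :=
  forall (s1 : seq I) (B1 : I -> set R) (s2 : seq J) (B2 : J -> set R),
    (forall k, measurable (B1 k)) -> (forall k, measurable (B2 k)) ->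
    P (cyl_event X s1 B1 `&` cyl_event Z s2 B2) =
    (P (cyl_event X s1 B1) * P (cyl_event Z s2 B2))%E.

Definition same_law {I : Type} (X X' : I -> T -> R) : Prop :=
  forall (s : seq I) (B : I -> set R), (forall k, measurable (B k)) ->
    P (cyl_event X s B) = P (cyl_event X' s B).

Definition coord_cylinders (I : Type) : set (set (I -> R)) :=
  [set A | exists (j : I) (B : set R), measurable B /\ A = [set f | B (f j)]].

Definition path_measurable {I : Type} (A : set (I -> R)) : Prop :=
  <<s @coord_cylinders I >> A.

Definition stationary_under {I : Type} (sigma : I -> I) (X : I -> T -> R) : Prop :=
  same_law (fun j => X (sigma j)) X.

Definition ergodic_under {I : Type} (sigma : I -> I) (X : I -> T -> R) : Prop :=
  forall A : set (I -> R), path_measurable A ->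
    (forall f, A (f \o sigma) <-> A f) ->
    P ((fun w => fun j => X j w) @^-1` A) = 0%E \/
    P ((fun w => fun j => X j w) @^-1` A) = 1%E.
End Prob.

(* the array {(Y_{i,t}, W_{i,t})} encoded as a real family indexed by
   ((i,t), b): b = false gives Y_{i,t}, b = true gives W_{i,t} *)
Definition pair_array {T : Type} {R : Type} (Y W : int -> nat -> T -> R)
  (k : (int * nat) * bool) : T -> R :=
  if k.2 then W k.1.1 k.1.2 else Y k.1.1 k.1.2.

Definition shift_i (k : (int * nat) * bool) : (int * nat) * bool :=
  ((k.1.1 + 1)%R, k.1.2, k.2).
Definition shift_t (k : (int * nat) * bool) : (int * nat) * bool :=
  (k.1.1, k.1.2.+1, k.2).

(* Main.v *)
Require Import Defs.
From HB Require Import structures.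
From mathcomp Require Import all_boot all_order all_algebra.
From mathcomp Require Import all_classical all_reals all_analysis.
From mathcomp Require Import lra measurable_realfun.
Import Order.TTheory GRing.Theory Num.Theory.
Local Open Scope classical_set_scope.
Local Open Scope ring_scope.

Ltac noMM t := lazymatch t with
 | context[@Order.max _ _ _ _] => fail | context[@Order.min _ _ _ _] => fail
 | context[@Num.norm _ _ _] => fail | _ => idtac end.

Ltac mm := repeat match goal with
 | |- context[@Order.max _ _ ?a ?b] => noMM a; noMM b; let H := fresh "H" in
     first [ (have H : a <= b by lra); rewrite (max_r H)
           | (have H : b < a by lra); rewrite (max_l (ltW H))
           | case: (boolP (a <= b)) => H; [rewrite (max_r H) | rewrite -ltNge in H; rewrite (max_l (ltW H))]]
 | |- context[@Order.min _ _ ?a ?b] => noMM a; noMM b; let H := fresh "H" in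
     first [ (have H : a <= b by lra); rewrite (min_l H)
           | (have H : b < a by lra); rewrite (min_r (ltW H))
           | case: (boolP (a <= b)) => H; [rewrite (min_l H) | rewrite -ltNge in H; rewrite (min_r (ltW H))]]
 | |- context[@Num.norm _ _ ?a] => noMM a; let H := fresh "H" in
     first [ (have H : 0 <= a by lra); rewrite (ger0_norm H)
           | (have H : a < 0 by lra); rewrite (ltr0_norm H)
           | case: (boolP (0 <= a)) => H; [rewrite (ger0_norm H) | rewrite -ltNge in H; rewrite (ltr0_norm H)]]
 end.

Section Alg.
Variable R : realType.
Definition sp (y w : R) := pos_part (pos_part y - pos_part w) - Num.min (neg_part y) (neg_part w).
Definition mv (y w : R) := Num.min (pos_part y) (pos_part w) - pos_part (neg_part y - neg_part w).

Lemma posE1 (x : R) : 0 <= x -> pos_part x = x.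
Proof. by move=> h; rewrite /pos_part max_l. Qed.
Lemma posE2 (x : R) : x <= 0 -> pos_part x = 0.
Proof. by move=> h; rewrite /pos_part max_r. Qed.
Lemma negE1 (x : R) : 0 <= x -> neg_part x = 0.
Proof. by move=> h; rewrite /neg_part max_r // oppr_le0. Qed.
Lemma negE2 (x : R) : x <= 0 -> neg_part x = - x.
Proof. by move=> h; rewrite /neg_part max_l // oppr_ge0. Qed.

Ltac sg y := let H := fresh "H" in case: (lerP 0 y) => H;
  [rewrite (posE1 _ H) (negE1 _ H) | rewrite (posE2 _ (ltW H)) (negE2 _ (ltW H))]; move: H.

Lemma su_eq (Y W : int -> R) i :
  store_update Y W i = sp (Y i) (W i) + mv (Y (i - 1)) (W (i - 1)).
Proof. by rewrite /store_update /sp /mv !addrA. Qed.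

Lemma abs_split y w : `|sp y w| + `|mv y w| = `|y|.
Proof. rewrite /sp /mv. sg y; sg w; rewrite /pos_part; mm; intros; lra. Qed.

Lemma sp_pos y w e : 0 < y -> `|w| < e -> y - e < sp y w.
Proof. rewrite /sp /mv. sg y; sg w; rewrite /pos_part; mm; intros; lra. Qed.

Lemma mv_neg y w e : y < 0 -> `|w| < e -> mv y w < y + e.
Proof. rewrite /sp /mv. sg y; sg w; rewrite /pos_part; mm; intros; lra. Qed.

Lemma sp_gt0 y w : 0 < sp y w -> 0 < y.
Proof. rewrite /sp /mv. sg y; sg w; rewrite /pos_part; mm; intros; lra. Qed.
End Alg.
Arguments sp {R}. Arguments mv {R}. Arguments su_eq {R}. Arguments abs_split {R}. Arguments sp_pos {R}. Arguments mv_neg {R}. Arguments sp_gt0 {R}.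


Section Det.
Variable R : realType.

Lemma det (y w : int -> nat -> R) (n : nat) (dl : R) :
 (forall i t, y i t.+1 = sp (y i t) (w i t) + mv (y (i - 1) t) (w (i - 1) t)) ->
 (0 < n)%N -> 0 < dl ->
 (forall (i t : nat), (i <= n)%N -> (t < n)%N -> `|w i%:Z t| < dl / n%:R) ->
 y 0 0%N < - dl -> dl < y n%:Z 0%N ->
 exists (i t : nat), 0 < sp (y i%:Z t) (w i%:Z t) /\ mv (y (i%:Z - 1) t) (w (i%:Z - 1) t) < 0.
Proof.
move=> dyn n0 dl0 wsmall y0 yn.
case: (pselect (exists (i t : nat), 0 < sp (y i%:Z t) (w i%:Z t) /\
   mv (y (i%:Z - 1) t) (w (i%:Z - 1) t) < 0)) => // nD; exfalso.
have nD' (i t : nat) : ~ (0 < sp (y i%:Z t) (w i%:Z t) /\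
   mv (y (i%:Z - 1) t) (w (i%:Z - 1) t) < 0) by move=> h; apply: nD; exists i, t.
set e := dl / n%:R.
have n0R : 0 < (n%:R : R) by rewrite ltr0n.
have e0 : 0 < e by rewrite divr_gt0.
have ne : n%:R * e = dl by rewrite /e mulrC -mulrA mulVf ?mulr1 // gt_eqF.
have tle (t : nat) : (t <= n)%N -> t%:R * e <= dl.
  by move=> h; rewrite -ne ler_pM2r // ler_nat.
have key : forall t, (t < n)%N -> y t%:Z t < - (dl - t%:R * e) /\ dl - t%:R * e < y n%:Z t.
  elim => [|t IH] ltn; first by rewrite mul0r subr0.
  have [A B] := IH (ltnW ltn).
  have tl := tle t.+1 (ltnW ltn).
  have tl' := tle t (ltnW (ltnW ltn)).
  have eS : t.+1%:R * e = t%:R * e + e by rewrite -nat1r mulrDl mul1r addrC.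
  split.
  - rewrite dyn.
    have -> : (t.+1%:Z - 1 = t%:Z)%R by rewrite -addn1 PoszD addrK.
    have yt0 : y t%:Z t < 0 by lra.
    have hm := mv_neg _ _ _ yt0 (wsmall t t (ltnW (ltnW ltn)) (ltnW ltn)).
    have hm' : mv (y t%:Z t) (w t%:Z t) < - (dl - t.+1%:R * e).
      by rewrite eS; rewrite -/e in hm; lra.
    have hs : sp (y t.+1%:Z t) (w t.+1%:Z t) <= 0.
      rewrite leNgt; apply/negP => hs; apply: (nD' t.+1 t); split => //.
      have -> : (t.+1%:Z - 1 = t%:Z)%R by rewrite -addn1 PoszD addrK.
      by apply: (lt_le_trans hm'); lra.
    lra.
  - rewrite dyn.
    have hp : 0 < y n%:Z t by lra.
    have hs := sp_pos _ _ _ hp (wsmall n t (leqnn n) (ltnW ltn)).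
    have hm : 0 <= mv (y (n%:Z - 1) t) (w (n%:Z - 1) t).
      by rewrite leNgt; apply/negP => hm; apply: (nD' n t); split => //; rewrite -/e in hs; lra.
    rewrite -/e in hs; rewrite eS; lra.
have ltp : (n.-1 < n)%N by rewrite ltn_predL.
have [A B] := key n.-1 ltp.
have eS : n.-1%:R * e + e = dl by rewrite -ne -{2}(prednK n0) -nat1r mulrDl mul1r addrC.
have hz : (n%:Z - 1 = n.-1%:Z)%R by rewrite -{1}(prednK n0) -addn1 PoszD addrK.
have hp : 0 < y n%:Z n.-1 by lra.
have hs := sp_pos _ _ _ hp (wsmall n n.-1 (leqnn n) ltp).
have yt0 : y n.-1%:Z n.-1 < 0 by lra.
have hm := mv_neg _ _ _ yt0 (wsmall n.-1 n.-1 (ltnW ltp) ltp).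
rewrite -/e in hs hm.
apply: (nD' n n.-1); rewrite hz; split; lra.
Qed.
End Det.

Section Prob1.
Context d (T : measurableType d) (R : realType) (P : probability T R).

Lemma int_transfer d' (T' : measurableType d') (X X' : T -> T')
  (mX : measurable_fun setT X) (mX' : measurable_fun setT X') (f : T' -> \bar R) :
  measurable_fun [set: T'] f -> (forall y, (0 <= f y)%E) ->
  (forall A, measurable A -> P (X @^-1` A) = P (X' @^-1` A)) ->
  (\int[P]_x f (X x) = \int[P]_x f (X' x))%E.
Proof.
move=> mf f0 eqA.
pose Xm : {mfun T >-> T'} := HB.pack X (isMeasurableFun.Build _ _ _ _ X mX).
pose Xm' : {mfun T >-> T'} := HB.pack X' (isMeasurableFun.Build _ _ _ _ X' mX').
have -> : (\int[P]_x f (X x) = \int[distribution P Xm]_y f y)%E.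
  by rewrite ge0_integral_distribution.
have -> : (\int[P]_x f (X' x) = \int[distribution P Xm']_y f y)%E.
  by rewrite ge0_integral_distribution.
apply: eq_measure_integral => A mA _.
exact: eqA.
Qed.

Lemma law2 (Y1 W1 Y2 W2 : T -> R) :
  measurable_fun setT Y1 -> measurable_fun setT W1 ->
  measurable_fun setT Y2 -> measurable_fun setT W2 ->
  (forall A B, measurable A -> measurable B ->
     P (Y1 @^-1` A `&` W1 @^-1` B) = P (Y2 @^-1` A `&` W2 @^-1` B)) ->
  forall C : set (R * R), measurable C ->
  P ((fun x => (Y1 x, W1 x)) @^-1` C) = P ((fun x => (Y2 x, W2 x)) @^-1` C).
Proof.
move=> mY1 mW1 mY2 mW2 hAB C mC.
have m1 := measurable_fun_pair mY1 mW1.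
have m2 := measurable_fun_pair mY2 mW2.
pose X1 : {mfun T >-> (R * R)%type} := HB.pack (fun x => (Y1 x, W1 x)) (isMeasurableFun.Build _ _ _ _ _ m1).
pose X2 : {mfun T >-> (R * R)%type} := HB.pack (fun x => (Y2 x, W2 x)) (isMeasurableFun.Build _ _ _ _ _ m2).
have := @measure_unique _ R _ [set A `*` B | A in measurable & B in measurable]
  (fun _ => setT) (measurable_prod_measurableType _ _) _ _ _
  (distribution P X1) (distribution P X2) _ _ C mC.
apply.
- move=> _ _ [A1 mA1 [B1 mB1 <-]] [A2 mA2 [B2 mB2 <-]].
  exists (A1 `&` A2); first exact: measurableI.
  exists (B1 `&` B2); first exact: measurableI.
  by rewrite setXI.
- move=> _; exists setT => //; exists setT => //; by rewrite setXTT.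
- by rewrite bigcup_const.
- move=> _ [A mA [B mB <-]].
  rewrite /distribution /pushforward /=.
  have E (Y' W' : T -> R) : (fun x => (Y' x, W' x)) @^-1` (A `*` B) = Y' @^-1` A `&` W' @^-1` B by [].
  exact: (hAB A B mA mB).
- by move=> _; exact: (le_lt_trans (probability_le1 _ measurableT) (ltry 1)). 
Qed.

Lemma mmax d' (U : measurableType d') (f g : U -> R) :
  measurable_fun setT f -> measurable_fun setT g ->
  measurable_fun setT (fun x => Num.max (f x) (g x)).
Proof. by move=> mf mg; exact: measurable_maxr. Qed.
Lemma mmin d' (U : measurableType d') (f g : U -> R) :
  measurable_fun setT f -> measurable_fun setT g ->
  measurable_fun setT (fun x => Num.min (f x) (g x)).
Proof. by move=> mf mg; exact: measurable_minr. Qed.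
Lemma msub d' (U : measurableType d') (f g : U -> R) :
  measurable_fun setT f -> measurable_fun setT g ->
  measurable_fun setT (fun x => f x - g x).
Proof. by move=> mf mg; exact: measurable_funB. Qed.
Lemma mopp d' (U : measurableType d') (f : U -> R) :
  measurable_fun setT f -> measurable_fun setT (fun x => - f x).
Proof. by move=> mf; exact: measurable_funN. Qed.
Lemma mpos d' (U : measurableType d') (f : U -> R) :
  measurable_fun setT f -> measurable_fun setT (fun x => pos_part (f x)).
Proof. by move=> mf; apply: mmax => //; exact: measurable_cst. Qed.
Lemma mneg d' (U : measurableType d') (f : U -> R) :
  measurable_fun setT f -> measurable_fun setT (fun x => neg_part (f x)).
Proof. by move=> mf; apply: mmax; [exact: mopp|exact: measurable_cst]. Qed.
Lemma msp d' (U : measurableType d') (f g : U -> R) :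
  measurable_fun setT f -> measurable_fun setT g ->
  measurable_fun setT (fun x => sp (f x) (g x)).
Proof.
move=> mf mg; rewrite /sp; apply: msub.
  by apply: mpos; apply: msub; apply: mpos.
by apply: mmin; apply: mneg.
Qed.
Lemma mmv d' (U : measurableType d') (f g : U -> R) :
  measurable_fun setT f -> measurable_fun setT g ->
  measurable_fun setT (fun x => mv (f x) (g x)).
Proof.
move=> mf mg; rewrite /mv; apply: msub.
  by apply: mmin; apply: mpos.
by apply: mpos; apply: msub; apply: mneg.
Qed.
Lemma mabsE d' (U : measurableType d') (f : U -> R) :
  measurable_fun setT f -> measurable_fun setT (fun x => (`|f x|)%:E).
Proof.
move=> mf; apply/measurable_EFinP.
exact: (measurableT_comp (@normr_measurable R setT) mf).
Qed.

Lemma cancel0 (Ynew Yi Yim Wi Wim : T -> R) :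
  measurable_fun setT Yi -> measurable_fun setT Wi ->
  measurable_fun setT Yim -> measurable_fun setT Wim ->
  (forall x, Ynew x = sp (Yi x) (Wi x) + mv (Yim x) (Wim x)) ->
  (\int[P]_x (`|Ynew x|)%:E = \int[P]_x (`|Yi x|)%:E)%E ->
  (\int[P]_x (`|Yi x|)%:E < +oo)%E ->
  (forall C : set (R * R), measurable C ->
    P ((fun x => (Yim x, Wim x)) @^-1` C) = P ((fun x => (Yi x, Wi x)) @^-1` C)) ->
  P.-negligible [set x | 0 < sp (Yi x) (Wi x) /\ mv (Yim x) (Wim x) < 0].
Proof.
move=> mYi mWi mYim mWim hnew hint hfin hlaw.
pose a x := `|sp (Yi x) (Wi x)|.
pose b x := `|mv (Yim x) (Wim x)|.
pose b' x := `|mv (Yi x) (Wi x)|.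
pose c x := a x + b x - `|Ynew x|.
have ma : measurable_fun setT (fun x => (a x)%:E) by apply: mabsE; exact: msp.
have mb : measurable_fun setT (fun x => (b x)%:E) by apply: mabsE; exact: mmv.
have mb' : measurable_fun setT (fun x => (b' x)%:E) by apply: mabsE; exact: mmv.
have c0 x : 0 <= c x.
  by rewrite /c subr_ge0 hnew /a /b; exact: ler_normD.
have mc : measurable_fun setT (fun x => (c x)%:E).
  apply/measurable_EFinP; apply: msub; first apply: measurable_funD.
  - by apply/measurable_EFinP.
  - by apply/measurable_EFinP.
  have -> : (fun x => `|Ynew x|) = (fun x => `|sp (Yi x) (Wi x) + mv (Yim x) (Wim x)|).
    by apply: funext => x; rewrite hnew.
  apply: (measurableT_comp (@normr_measurable R setT)).
  by apply: measurable_funD; [exact: msp|exact: mmv].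
have Ib : (\int[P]_x (b x)%:E = \int[P]_x (b' x)%:E)%E.
  have mf : measurable_fun [set: (R * R)%type] (fun p : R * R => (`|mv p.1 p.2|)%:E).
    by apply: mabsE; apply: mmv; [exact: measurable_fst|exact: measurable_snd].
  have := int_transfer _ _ _ _ (measurable_fun_pair mYim mWim) (measurable_fun_pair mYi mWi) _ mf
     (fun p => (introT (@idP _) (normr_ge0 (mv p.1 p.2)) : (0 <= (`|mv p.1 p.2|)%:E)%E)) hlaw.
  by [].
have Iab : (\int[P]_x ((a x)%:E + (b x)%:E) = \int[P]_x (`|Yi x|)%:E)%E.
  rewrite ge0_integralD //; try by move=> x _; rewrite lee_fin ?normr_ge0 ?c0.
  rewrite Ib -ge0_integralD //; try by move=> x _; rewrite lee_fin ?normr_ge0 ?c0.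
  by apply: eq_integral => x _; rewrite -EFinD /a /b' abs_split.
have Iab2 : (\int[P]_x ((a x)%:E + (b x)%:E) =
    \int[P]_x (`|Ynew x|)%:E + \int[P]_x (c x)%:E)%E.
  rewrite -ge0_integralD //; try by move=> x _; rewrite lee_fin ?normr_ge0 ?c0.
  - by apply: eq_integral => x _; rewrite -!EFinD /c; congr (_%:E); lra.
  - by apply: mabsE => //; apply: (eq_measurable_fun (fun x => sp (Yi x) (Wi x) + mv (Yim x) (Wim x))); [move=> x _; rewrite hnew|apply: measurable_funD; [exact: msp|exact: mmv]].
have Ic : (\int[P]_x (c x)%:E = 0)%E.
  move: Iab2; rewrite Iab hint.
  have hI0 : (0 <= \int[P]_x (`|Yi x|)%:E)%E by apply: integral_ge0 => x _; rewrite lee_fin.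
  have hc0 : (0 <= \int[P]_x (c x)%:E)%E by apply: integral_ge0 => x _; rewrite lee_fin.
  move: hfin hI0 hc0.
  case: (\int[P]_x (`|Yi x|)%:E)%E => [r| |] //= _ _.
  case: (\int[P]_x (c x)%:E)%E => [s| |] //= _.
  by move=> /eqP; rewrite -EFinD eqe => /eqP h; congr (_%:E); lra.
have : ae_eq P setT (fun x => (c x)%:E) (cst 0%E).
  apply/(ae_eq_integral_abs P measurableT mc).
  rewrite -Ic; apply: eq_integral => x _.
  by rewrite gee0_abs // lee_fin.
case => N [mN PN sub]; exists N; split => // x [hs hm]; apply: sub => /=.
move=> /(_ I) [] /eqP; rewrite /c /a /b hnew.
rewrite subr_eq0; apply/negP; rewrite neq_lt; apply/orP; right.
rewrite (gtr0_norm hs) (ltr0_norm hm).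
rewrite ltr_norml; apply/andP; split; lra.
Qed.
End Prob1.
Arguments int_transfer {d T R} P {d' T'} [X X'].
Arguments mabsE {R d' U f}.
Arguments msp {R d' U f g}.
Arguments mmv {R d' U f g}.
Arguments law2 {d T R} P [Y1 W1 Y2 W2].
Arguments cancel0 {d T R} P [Ynew Yi Yim Wi Wim].

Section Cyl.
Context d (T : measurableType d) (R : realType).
Lemma cyl1 (I : Type) (X : I -> T -> R) k B :
  cyl_event X [:: k] B = X k @^-1` B k.
Proof. by rewrite /cyl_event big_seq1. Qed.
Lemma cyl2 (I : Type) (X : I -> T -> R) k1 k2 B :
  cyl_event X [:: k1; k2] B = X k1 @^-1` B k1 `&` X k2 @^-1` B k2.
Proof. by rewrite /cyl_event big_cons big_seq1. Qed.
Lemma cylP (I : eqType) (X : I -> T -> R) s B x :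
  cyl_event X s B x <-> (forall k, k \in s -> B k (X k x)).
Proof.
elim: s => [|k s IH]; first by rewrite /cyl_event big_nil; split.
rewrite /cyl_event big_cons -/(cyl_event X s B); split.
  move=> [h1 /IH h2] k'; rewrite in_cons => /orP [/eqP -> //|]; exact: h2.
move=> h; split; first by apply: h; rewrite in_cons eqxx.
by apply/IH => k' hk; apply: h; rewrite in_cons hk orbT.
Qed.
End Cyl.

Section Main.
Context d (T : measurableType d) (R : realType) (P : probability T R)
  (Y W : int -> nat -> T -> R).
Hypothesis mW : forall i t, measurable_fun setT (W i t).
Hypothesis mY : forall i t, measurable_fun setT (Y i t).
Hypothesis inv : forall t, same_law P (fun i => Y i t) (fun i => Y i 0%N).
Hypothesis stI : stationary_under P shift_i (pair_array Y W).
Hypothesis intY : P.-integrable setT (EFin \o Y (0:int) 0%N).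
Hypothesis dyn : forall t w i, Y i t.+1 w =
     store_update (fun j => Y j t w) (fun j => W j t w) i.

Lemma lawT i t B : measurable B -> P (Y i t @^-1` B) = P (Y i 0%N @^-1` B).
Proof.
move=> mB; have := inv t [:: i] (fun _ => B) (fun _ => mB).
by rewrite !cyl1.
Qed.

Lemma lawI i t A B : measurable A -> measurable B ->
  P (Y (i + 1) t @^-1` A `&` W (i + 1) t @^-1` B) = P (Y i t @^-1` A `&` W i t @^-1` B).
Proof.
move=> mA mB.
have := stI [:: (i, t, false); (i, t, true)] (fun k => if k.2 then B else A)
  (fun k => if k.2 as b return measurable (if b then B else A) then mB else mA).
by rewrite !cyl2.
Qed.

Lemma lawI1 i t B : measurable B -> P (Y (i + 1) t @^-1` B) = P (Y i t @^-1` B).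
Proof.
move=> mB; have := stI [:: (i, t, false)] (fun _ => B) (fun _ => mB).
by rewrite !cyl1.
Qed.

Lemma lawN (n : nat) B : measurable B -> P (Y n%:Z 0%N @^-1` B) = P (Y 0 0%N @^-1` B).
Proof.
move=> mB; elim: n => [//|n IH].
by rewrite -IH -(lawI1 n%:Z 0%N B mB) -[in RHS]PoszD addn1.
Qed.

Lemma intfin (n : nat) t : (\int[P]_x (`|Y n%:Z t x|)%:E < +oo)%E.
Proof.
have h0 := @integrableP _ _ _ P setT (EFin \o Y 0 0%N).
have [_ h] := elimT h0 intY.
have mab := mabsE (@measurable_id _ R setT).
rewrite /= in h.
rewrite (int_transfer P (mY n t) (mY n 0) _ mab
    (fun y => ltac:(by rewrite lee_fin)) (fun B mB => lawT n t B mB)).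
rewrite (int_transfer P (mY n 0) (mY 0 0) _ mab
    (fun y => ltac:(by rewrite lee_fin)) (fun B mB => lawN n B mB)).
exact: h.
Qed.

Lemma negD (i t : nat) : P.-negligible [set x | 0 < sp (Y i%:Z t x) (W i%:Z t x) /\
   mv (Y (i%:Z - 1) t x) (W (i%:Z - 1) t x) < 0].
Proof.
have mab := mabsE (@measurable_id _ R setT).
apply: (cancel0 P (Ynew := Y i t.+1)) => //.
- by move=> x; rewrite dyn su_eq.
- rewrite (int_transfer P (mY i t.+1) (mY i 0) _ mab
    (fun y => ltac:(by rewrite lee_fin)) (fun B mB => lawT i t.+1 B mB)).
  by rewrite (int_transfer P (mY i t) (mY i 0) _ mab
    (fun y => ltac:(by rewrite lee_fin)) (fun B mB => lawT i t B mB)).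
- exact: intfin.
- apply: law2 => // A B mA mB.
  by rewrite -(lawI (i%:Z - 1) t A B mA mB) subrK.
Qed.
End Main.

Section Helpers.
Context d (T : measurableType d) (R : realType) (P : probability T R).

Lemma mpre (f : T -> R) : measurable_fun setT f -> forall A, measurable A -> measurable (f @^-1` A).
Proof. by move=> mf A mA; rewrite -[X in measurable X]setTI; exact: mf. Qed.

Lemma mlt (b : R) : measurable [set x : R | x < b].
Proof.
have -> : [set x : R | x < b] = `]-oo, b[%classic by apply/seteqP; split => x; rewrite /= in_itv.
exact: measurable_itv.
Qed.
Lemma mgt (b : R) : measurable [set x : R | b < x].
Proof.
have -> : [set x : R | b < x] = `]b, +oo[%classic by apply/seteqP; split => x; rewrite /= in_itv /= andbT.
exact: measurable_itv.
Qed.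
Lemma mball (e : R) : measurable [set x : R | - e < x < e].
Proof.
by rewrite -set_itvoo; exact: measurable_itv.
Qed.

Lemma negl0 (A : set T) : measurable A -> P A = 0%E -> P.-negligible A.
Proof. by move=> mA h; exists A; split. Qed.

Lemma nnegl_gt0 (A : set T) : measurable A -> ~ P.-negligible A -> (0 < P A)%E.
Proof.
move=> mA h; rewrite lt0e measure_ge0 andbT; apply/eqP => h0; apply: h; exact: negl0.
Qed.

Lemma not_ae_ge0 (X : T -> R) : ~ {ae P, forall w, 0 <= X w} -> ~ P.-negligible [set w | X w < 0].
Proof.
move=> h hn; apply: h; apply: negligibleS hn => w /= hw.
by rewrite ltNge; apply/negP.
Qed.
Lemma not_ae_le0 (X : T -> R) : ~ {ae P, forall w, X w <= 0} -> ~ P.-negligible [set w | 0 < X w].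
Proof.
move=> h hn; apply: h; apply: negligibleS hn => w /= hw.
by rewrite ltNge; apply/negP.
Qed.
End Helpers.
Arguments mpre {d T R f}.
Arguments negl0 {d T R} P [A].
Arguments nnegl_gt0 {d T R} P [A].
Arguments not_ae_ge0 {d T R} P [X].
Arguments not_ae_le0 {d T R} P [X].
Arguments mlt {R}. Arguments mgt {R}. Arguments mball {R}.

Section Ergo.
Context d (T : measurableType d) (R : realType) (P : probability T R)
  (Y W : int -> nat -> T -> R).
Hypothesis mY : forall i t, measurable_fun setT (Y i t).
Hypothesis stI : stationary_under P shift_i (pair_array Y W).
Hypothesis ergI : ergodic_under P shift_i (pair_array Y W).

Lemma ergo_step : ~ P.-negligible [set w | Y 0 0%N w < 0] ->
  ~ P.-negligible [set w | 0 < Y 0 0%N w] ->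
  exists n : nat, (0 < n)%N /\ ~ P.-negligible [set w | Y 0 0%N w < 0 /\ 0 < Y n%:Z 0%N w].
Proof.
move=> hneg hpos.
pose E (m : nat) := [set w | 0 < Y m%:Z 0%N w].
pose U (m : nat) := \bigcup_k E (m + k)%N.
pose S := \bigcap_m U m.
have mE m : measurable (E m) by exact: (mpre (mY m%:Z 0%N) _ (mgt 0)).
have mU m : measurable (U m) by apply: bigcupT_measurable => k; exact: mE.
have mS : measurable S by apply: bigcapT_measurable => m; exact: mU.
pose pA := [set f : (int * nat * bool -> R) | forall m : nat, exists k : nat,
   0 < f (((m + k)%N%:Z, 0%N), false)].
have preA : (fun w => fun j => pair_array Y W j w) @^-1` pA = S.
  rewrite eqEsubset; split.
    by move=> w h m _; have [k hk] := h m; exists k.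
  by move=> w h m; have [k _ hk] := h m I; exists k.
have PS : P S = 0%E \/ P S = 1%E.
  rewrite -preA; apply: ergI.
  - pose C (i : nat) := [set f : (int * nat * bool -> R) | 0 < f ((i%:Z, 0%N), false)].
    have mC i : path_measurable (C i).
      apply: sub_sigma_algebra; exists ((i%:Z, 0%N), false), [set x : R | 0 < x].
      by split => //; exact: mgt.
    have -> : pA = \bigcap_m \bigcup_k C (m + k)%N.
      rewrite eqEsubset; split.
        by move=> f h m _; have [k hk] := h m; exists k.
      by move=> f h m; have [k _ hk] := h m I; exists k.
    rewrite -[X in path_measurable X]setCK setC_bigcap.
    case: (@smallest_sigma_algebra _ setT (@coord_cylinders R (int * nat * bool)%type)) => _ hC hU.
    rewrite -setTD; apply: (hC); apply: (hU) => m.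
    rewrite -setTD; apply: (hC); apply: (hU) => k; exact: mC.
  - move=> f; split => h m.
      have [k hk] := h m; exists k.+1.
      have e : ((m + k)%N%:Z + 1 = (m + k.+1)%N%:Z)%R by rewrite -PoszD addn1 addnS.
      by move: hk; rewrite /= /shift_i /= e.
    have [k hk] := h m.+1; exists k.
    have e : ((m + k)%N%:Z + 1 = (m.+1 + k)%N%:Z)%R by rewrite -PoszD addn1 addSn.
    by rewrite /= /shift_i /= e.
have c0 : (0 < P (E 0%N))%E by exact: (nnegl_gt0 P (mE 0%N) hpos).
have PEm m : P (E m) = P (E 0%N) := @lawN _ _ _ P Y W stI m _ (mgt 0).
have PU m : (P (E 0%N) <= P (U m))%E.
  rewrite -(PEm m); apply: le_measure; rewrite ?inE; [exact: mE|exact: mU|].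
  by move=> w hw; exists 0%N => //; rewrite addn0.
have noninc : nonincreasing_seq U.
  move=> n m nm; apply/subsetPset => w [k _ hk].
  exists (m - n + k)%N => //; by rewrite addnA subnKC.
have hc := nonincreasing_cvg_mu (mu := P) (F := U) ltac:(exact: (le_lt_trans (probability_le1 P (mU 0%N)) (ltry 1))) mU mS noninc.
have cS : (P (E 0%N) <= P S)%E.
  rewrite -(cvg_lim _ hc) //.
  apply: lime_ge; first exact: (cvgP _ hc).
  by apply: nearW => m /=.
have PS1 : P S = 1%E.
  case: PS => // h0; move: cS; rewrite h0 => h1.
  by move: (lt_le_trans c0 h1); rewrite ltxx.
have nS : P.-negligible (~` S).
  by apply: negl0; [exact: measurableC|rewrite probability_setC // PS1 subee].
case: (pselect (exists n : nat, (0 < n)%N /\ ~ P.-negligible [set w | Y 0 0%N w < 0 /\ 0 < Y n%:Z 0%N w])) => // hn.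
exfalso; apply: hneg.
have hall k : P.-negligible [set w | Y 0 0%N w < 0 /\ 0 < Y (1 + k)%N%:Z 0%N w].
  case: (pselect (P.-negligible [set w | Y 0 0%N w < 0 /\ 0 < Y (1 + k)%N%:Z 0%N w])) => // h.
  by exfalso; apply: hn; exists (1 + k)%N.
apply: (negligibleS _ (negligibleU nS (negligible_bigcup hall))).
move=> w hw; case: (pselect (S w)) => hSw; [right|by left].
have [k _ hk] := hSw 1%N I.
by exists k.
Qed.
End Ergo.

Lemma small_inv (R : realType) (x : R) : 0 < x -> exists k : nat, (k.+1%:R)^-1 < x.
Proof.
move=> x0; exists (Num.Def.trunc x^-1).
rewrite invf_plt ?posrE ?ltr0Sn //; exact: truncnS_gt.
Qed.

Lemma get_delta d (T : measurableType d) (R : realType) (P : probability T R) (X1 X2 : T -> R) :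
  ~ P.-negligible [set w | X1 w < 0 /\ 0 < X2 w] ->
  exists dl : R, 0 < dl /\ ~ P.-negligible [set w | X1 w < - dl /\ dl < X2 w].
Proof.
move=> h.
case: (pselect (exists dl : R, 0 < dl /\ ~ P.-negligible [set w | X1 w < - dl /\ dl < X2 w])) => // hn.
exfalso; apply: h.
have hall k : P.-negligible [set w | X1 w < - (k.+1%:R)^-1 /\ (k.+1%:R)^-1 < X2 w].
  case: (pselect (P.-negligible [set w | X1 w < - (k.+1%:R : R)^-1 /\ (k.+1%:R)^-1 < X2 w])) => // h'.
  by exfalso; apply: hn; exists (k.+1%:R)^-1; split => //; rewrite invr_gt0 ltr0Sn.
apply: (negligibleS _ (negligible_bigcup hall)).
move=> w [h1 h2].
have m0 : 0 < Num.min (- X1 w) (X2 w) by rewrite lt_min oppr_gt0 h1 h2.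
have [k hk] := small_inv _ _ m0.
exists k => //; move: hk; rewrite lt_min => /andP [a b]; split => //; by rewrite ltrNr.
Qed.

Lemma prod_gt0 (R : realType) (I : Type) (s : seq I) (F : I -> \bar R) :
  (forall k, 0 < F k)%E -> (0 < \prod_(k <- s) F k)%E.
Proof.
move=> h; elim: s => [|k s IH]; first by rewrite big_nil lte01.
by rewrite big_cons mule_gt0.
Qed.

Theorem proposition3p10 (d : measure_display) (T : measurableType d)
  (R : realType) (P : probability T R)
  (Y W : int -> nat -> T -> R) :
  (* measurability *)
  (forall i t, measurable_fun setT (W i t)) ->
  (forall i t, measurable_fun setT (Y i t)) ->
  (* weights i.i.d., law lambda with 0 in its support *)
  mutually_independent P (fun k : int * nat => W k.1 k.2) ->
  (forall i t (B : set R), measurable B ->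
     P (W i t @^-1` B) = P (W (0:int) 0%N @^-1` B)) ->
  (forall e : R, 0 < e -> (0 < P (W (0:int) 0%N @^-1` [set x : R | (- e < x < e)%R]))%E) ->
  (* initial configuration independent of the weights *)
  indep_families P (fun i => Y i 0%N) (fun k : int * nat => W k.1 k.2) ->
  (* dynamics *)
  (forall t w i, Y i t.+1 w =
     store_update (fun j => Y j t w) (fun j => W j t w) i) ->
  (* mu invariant *)
  (forall t, same_law P (fun i => Y i t) (fun i => Y i 0%N)) ->
  (* integrability *)
  P.-integrable setT (EFin \o Y (0:int) 0%N) ->
  (* stationarity and ergodicity under shifts in i and in t *)
  stationary_under P shift_i (pair_array Y W) ->
  ergodic_under P shift_i (pair_array Y W) ->
  stationary_under P shift_t (pair_array Y W) ->
  ergodic_under P shift_t (pair_array Y W) ->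
  {ae P, forall w, 0 <= Y (0:int) 0%N w} \/ {ae P, forall w, Y (0:int) 0%N w <= 0}.
Proof.
move=> mW mY indW Wid W0s indYW dyn inv intY stI ergI _ _.
case: (pselect {ae P, forall w, 0 <= Y (0:int) 0%N w}) => h1; first by left.
case: (pselect {ae P, forall w, Y (0:int) 0%N w <= 0}) => h2; first by right.
exfalso.
have hneg := not_ae_ge0 P h1.
have hpos := not_ae_le0 P h2.
have [n [n0 hn]] := @ergo_step _ _ _ P Y W mY stI ergI hneg hpos.
have [dl [dl0 hdl]] := get_delta _ _ _ _ _ _ hn.
pose e := dl / n%:R.
have e0 : 0 < e by rewrite divr_gt0 // ltr0n.
pose B1 := fun i : int => if i == 0 then [set x : R | x < - dl] else [set x : R | dl < x].
have mB1 i : measurable (B1 i) by rewrite /B1; case: ifP => _; [exact: mlt|exact: mgt].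
pose s := [seq (i%:Z, t) | i <- iota 0 n.+1, t <- iota 0 n].
pose B2 := fun _ : int * nat => [set x : R | - e < x < e].
have mB2 k : measurable (B2 k) by exact: mball.
have key := indYW [:: 0; n%:Z] B1 s B2 mB1 mB2.
rewrite cyl2 in key.
have n0Z : (n%:Z == 0) = false by rewrite eqz_nat; apply/negbTE; rewrite -lt0n.
have cylYE : (fun i => Y i 0%N) 0 @^-1` B1 0 `&` (fun i => Y i 0%N) n%:Z @^-1` B1 n%:Z
   = [set w | Y 0 0%N w < - dl /\ dl < Y n%:Z 0%N w].
  by rewrite /B1 eqxx n0Z.
rewrite cylYE in key.
have mcylY : measurable [set w | Y 0 0%N w < - dl /\ dl < Y n%:Z 0%N w].
  exact: (measurableI _ _ (mpre (mY 0 0%N) _ (mlt _)) (mpre (mY n%:Z 0%N) _ (mgt _))).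
have PY := nnegl_gt0 P mcylY hdl.
have us : uniq s.
  rewrite allpairs_uniq ?iota_uniq //.
  by move=> [a b] [a' b'] _ _ /= [[->] ->].
have PW : (0 < P (cyl_event (fun k : int * nat => W k.1 k.2) s B2))%E.
  rewrite (indW s B2 us mB2); apply: prod_gt0 => k.
  by rewrite Wid //; exact: W0s.
have mcylW : measurable (cyl_event (fun k : int * nat => W k.1 k.2) s B2).
  rewrite /cyl_event; elim: s {us PW key} => [|k s' IH]; first by rewrite big_nil.
  by rewrite big_cons; apply: measurableI => //; exact: (mpre (mW _ _) _ (mB2 _)).
pose SY := [set w | Y 0 0%N w < - dl /\ dl < Y n%:Z 0%N w].
pose SW := cyl_event (fun k : int * nat => W k.1 k.2) s B2.
have Pint : (0 < P (SY `&` SW))%E.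
  by rewrite /SY /SW key mule_gt0.
have : P.-negligible (SY `&` SW).
  apply: (negligibleS _ (negligible_bigcup (fun i => negligible_bigcup
     (fun t => @negD _ _ _ P Y W mW mY inv stI intY dyn i t)))).
  move=> x [[y0 yn] /cylP hw].
  have := @det R (fun i t => Y i t x) (fun i t => W i t x) n dl.
  case.
  - by move=> i t; rewrite dyn su_eq.
  - exact: n0.
  - exact: dl0.
  - move=> i t hi ht; rewrite ltr_norml.
    have := hw (i%:Z, t); apply.
    by apply: allpairs_f; rewrite mem_iota /=; [rewrite ltnS|].
  - exact: y0.
  - exact: yn.
  move=> i [t [h3 h4]]; by exists i => //; exists t.
move=> /(measure_negligible (measurableI _ _ mcylY mcylW)) h0.
by move: Pint; rewrite h0 ltxx.
Qed.
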